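(* Let $\mathbf L=\{L_1,\dots,L_n\}$ be a finite multiset of positive rationals and $k\in\mathbb N_{>0}$, and suppose $L_{co}\neq l^\star$. Then $(I_{co},\,i\mapsto 1,\,i\mapsto k)$ is an admissible restriction. Moreover $|\mathcal C(I_{co},1,k)|=k\cdot|I_{co}|\le k\cdot\min(k-1,n)$, with equality when the $L_i$ are pairwise distinct; in particular the worst-case size is $\Theta(k\cdot\min(k,n))$.
   Context: For $l\in\mathbb Q_{>0}$: $m(l)=\sum_{i=1}^n\lfloor L_i/l\rfloor$, $c(l)=\sum_i(\lceil L_i/l\rceil-1)$; $l$ is feasible if $m(l)\ge k$; $l^\star$ is the unique optimal cut length (feasible length minimizing $c$ among feasible lengths; equals the largest feasible length). $L^{(k)}$ denotes the $k$-th largest element of $\mathbf L$ counted with multiplicity. The cut-off length is $L_{co}=L^{(k)}$ if $k\le n$ and $L_{co}=0$ if $k>n$; $I_{co}=\{i\in[1..n]: L_i>L_{co}\}$. Candidate multiset: $\mathcal C(I,f_l,f_u)=\biguplus_{i\in I}\{L_i/j: j\in\mathbb N,\ f_l(i)\le j\le f_u(i)\}$ (one occurrence per pair $(i,j)$). A triple $(I,f_l,f_u)$ with $I\subseteq[1..n]$, $f_l,f_u:I\to\mathbb N_{>0}$ is an admissible restriction if (i) for all $i\in I$, $f_l(i)=1$ or $L_i/(f_l(i)-1)$ is infeasible; (ii) for all $i\in I$, $L_i/f_u(i)$ is feasible; (iii) for all $i'\notin I$, $L_{i'}$ is feasible and $L_{i'}\ne l^\star$. *)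

(* Defs.v *)
From HB Require Import structures.
From mathcomp Require Import all_boot all_order all_algebra.
Unset Printing Implicit Defensive.
Import Order.TTheory GRing.Theory Num.Theory.
Local Open Scope ring_scope.

(* The multiset L = {L_1,...,L_n} is a list L : seq rat with n = size L;
   L_i is nth 0 L i for i : 'I_(size L). *)
Definition Li (L : seq rat) (i : 'I_(size L)) : rat := nth 0 L i.

Definition mcnt (L : seq rat) (l : rat) : int :=
  \sum_(x <- L) Num.floor (x / l).

Definition ccost (L : seq rat) (l : rat) : int :=
  \sum_(x <- L) (Num.ceil (x / l) - 1).

Definition feasible (L : seq rat) (k : nat) (l : rat) : bool :=
  (0 < l) && (k%:Z <= mcnt L l).

(* l is an optimal cut length: feasible and minimizing c among feasible lengths
   (the paper asserts this l^* is unique). *)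
Definition optimal (L : seq rat) (k : nat) (l : rat) : Prop :=
  feasible L k l /\ forall l', feasible L k l' -> ccost L l <= ccost L l'.

Definition kth_largest (L : seq rat) (k : nat) : rat :=
  nth 0 (sort (fun x y : rat => y <= x) L) k.-1.

Definition Lco (L : seq rat) (k : nat) : rat :=
  if (k <= size L)%N then kth_largest L k else 0.

Definition Ico (L : seq rat) (k : nat) : {set 'I_(size L)} :=
  [set i | Lco L k < Li L i].

(* Candidate multiset C(I, f_l, f_u), as a list with one entry per pair (i, j),
   i in I, f_l(i) <= j <= f_u(i). *)
Definition cands (L : seq rat) (I : {set 'I_(size L)})
    (fl fu : 'I_(size L) -> nat) : seq rat :=
  [seq Li L i / j%:R | i <- enum I, j <- iota (fl i) ((fu i).+1 - fl i)].

Definition admissible (L : seq rat) (k : nat) (lstar : rat)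
    (I : {set 'I_(size L)}) (fl fu : 'I_(size L) -> nat) : Prop :=
  (forall i, i \in I -> (0 < fl i)%N /\ (0 < fu i)%N) /\
  (forall i, i \in I -> fl i = 1%N \/ ~~ feasible L k (Li L i / (fl i - 1)%N%:R)) /\
  (forall i, i \in I -> feasible L k (Li L i / (fu i)%:R)) /\
  (forall i', i' \notin I -> feasible L k (Li L i') /\ Li L i' != lstar).

(* Main.v *)
Require Import Defs.
From HB Require Import structures.
From mathcomp Require Import all_boot all_order all_algebra.
From mathcomp Require Import zify.
Import Order.TTheory GRing.Theory Num.Theory.
Local Open Scope ring_scope.
Lemma mcnt_ge_count {L : seq rat} {l : rat} : 0 < l -> all (fun x : rat => 0 < x) L ->
  (count (fun x => l <= x) L)%:Z <= mcnt L l.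
Proof.
move=> l0; elim: L => [|x L IH] /=; first by rewrite /mcnt big_nil.
case/andP=> x0 /IH {}IH; rewrite /mcnt big_cons PoszD lerD //.
case: (boolP (l <= x)) => lx /=.
  by rewrite floor_ge_int ler_pdivlMr // mul1r.
by rewrite floor_ge0 divr_ge0 // ltW.
Qed.

Lemma mcnt_ge0 {L : seq rat} {l : rat} : 0 < l -> all (fun x : rat => 0 < x) L -> 0 <= mcnt L l.
Proof. by move=> l0 H; apply: le_trans (mcnt_ge_count l0 H). Qed.

Lemma mcnt_ge_elem (L : seq rat) (l x : rat) : 0 < l -> all (fun x : rat => 0 < x) L ->
  x \in L -> Num.floor (x / l) <= mcnt L l.
Proof.
move=> l0; elim: L => [|y L IH] //= /andP[y0 H]; rewrite in_cons /mcnt big_cons.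
case/orP=> [/eqP<-|xL].
  by rewrite lerDl; apply: mcnt_ge0.
rewrite -[X in X <= _]add0r lerD ?IH //.
by rewrite floor_ge0 divr_ge0 // ltW.
Qed.

Lemma ccost_le (L : seq rat) (l1 l2 : rat) : 0 < l1 -> l1 <= l2 -> all (fun x : rat => 0 < x) L ->
  ccost L l2 <= ccost L l1.
Proof.
move=> l10 l12; elim: L => [|x L IH] /=; first by rewrite /ccost !big_nil.
case/andP=> x0 /IH {}IH; rewrite /ccost !big_cons lerD // lerB // le_ceil //.
rewrite ler_pM2l // lef_pV2 // posrE; exact: lt_le_trans l12.
Qed.

Lemma ccost_lt (L : seq rat) (l1 l2 : rat) : 0 < l1 -> l1 < l2 -> l2 \in L ->
  all (fun x : rat => 0 < x) L -> ccost L l2 < ccost L l1.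
Proof.
move=> l10 l12; elim: L => [|x L IH] //=; rewrite in_cons.
move=> hm /andP[x0 H]; rewrite /ccost !big_cons.
case/orP: hm => [/eqP<-|xL].
  apply: ltr_leD; last exact: ccost_le l10 (ltW l12) H.
  rewrite ltrD2r divff ?gt_eqF ?(lt_trans l10 l12) //.
  by rewrite ceil1 ceil_gt_int ltr_pdivlMr // mul1r.
apply: ler_ltD; last exact: IH.
rewrite lerB // le_ceil // ler_pM2l // lef_pV2 ?posrE ?(ltW l12) //.
exact: lt_trans l12.
Qed.

Definition geR : rel rat := fun x y : rat => y <= x.
Lemma geR_trans : transitive geR.
Proof. by move=> y x z h1 h2; rewrite /geR (le_trans h2 h1). Qed.
Lemma geR_refl : reflexive geR.
Proof. by move=> x; rewrite /geR lexx. Qed.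
Lemma geR_total : total geR.
Proof. by move=> x y; rewrite /geR le_total. Qed.

Section S.
Variables (s : seq rat) (j : nat).
Hypothesis ss : sorted geR s.
Hypothesis js : (j < size s)%N.
Let c := nth 0 s j.

Lemma le_nth i : (i < size s)%N -> (j <= i)%N -> nth 0 s i <= c.
Proof.
move=> ii ji; have h := sorted_leq_nth geR_trans geR_refl 0 ss; exact: (h j i js ii ji).
Qed.
Lemma ge_nth i : (i <= j)%N -> c <= nth 0 s i.
Proof.
move=> ij; have h := sorted_leq_nth geR_trans geR_refl 0 ss; exact: (h i j (leq_ltn_trans ij js) js ij).
Qed.

Lemma count_gt_le : (count (fun x : rat => (c < x)%R) s <= j)%N.
Proof.
rewrite -(cat_take_drop j s) count_cat.
have -> : count (fun x : rat => (c < x)%R) (drop j s) = 0%N.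
  apply/eqP; rewrite -leqn0 leqNgt -has_count -all_predC.
  apply/(all_nthP 0) => i; rewrite size_drop => hi /=.
  rewrite nth_drop -leNgt le_nth ?leq_addr //; by rewrite -ltn_subRL.
rewrite ?addn0 (leq_trans (count_size _ _)) // size_takel //; exact: ltnW.
Qed.

Lemma count_ge_ge : (j.+1 <= count (fun x : rat => (c <= x)%R) s)%N.
Proof.
rewrite -(cat_take_drop j.+1 s) count_cat.
have : all (fun x : rat => (c <= x)%R) (take j.+1 s).
  apply/(all_nthP 0) => i; rewrite size_takel // => hi.
  by rewrite nth_take // ge_nth.
rewrite all_count => /eqP ->; rewrite size_takel //; exact: leq_addr.
Qed.

Lemma count_gt_ge : uniq s -> (j <= count (fun x : rat => (c < x)%R) s)%N.
Proof.
move=> us; rewrite -(cat_take_drop j s) count_cat.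
have : all (fun x : rat => (c < x)%R) (take j s).
  apply/(all_nthP 0) => i; rewrite size_takel ?(ltnW js) // => hi.
  rewrite nth_take // lt_neqAle ge_nth ?(ltnW hi) // andbT.
  by rewrite /c nth_uniq // ?(ltn_trans hi js) // neq_ltn hi orbT.
rewrite all_count => /eqP ->; rewrite size_takel ?(ltnW js) //; exact: leq_addr.
Qed.
End S.

Lemma card_count (L : seq rat) (P : pred rat) :
  #|[set i : 'I_(size L) | P (nth 0 L i)]| = count P L.
Proof.
rewrite cardsE cardE /enum_mem size_filter.
rewrite -[in RHS](mkseq_nth 0 L) /mkseq -val_enum_ord -map_comp count_map.
by rewrite enumT.
Qed.

Lemma sumn_const (T : Type) (r : seq T) (k : nat) : sumn [seq k | _ <- r] = (k * size r)%N.
Proof. by elim: r => [|x r IH] /=; rewrite ?muln0 // IH mulnS. Qed.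

Theorem mainTheorem6 (L : seq rat) (k : nat) (lstar : rat) :
  all (fun x : rat => 0 < x) L ->
  (0 < k)%N ->
  optimal L k lstar ->
  Lco L k != lstar ->
  admissible L k lstar (Ico L k) (fun _ => 1%N) (fun _ => k)
  /\ size (cands L (Ico L k) (fun _ => 1%N) (fun _ => k)) = (k * #|Ico L k|)%N
  /\ (k * #|Ico L k| <= k * minn k.-1 (size L))%N
  /\ (uniq L -> (k * #|Ico L k|)%N = (k * minn k.-1 (size L))%N).
Proof.
move=> pos k0 [fstar optstar] neq.
set s := sort geR L.
have pS : perm_eq s L by rewrite /s perm_sort.
have ss : sorted geR s := sort_sorted geR_total L.
have sz : size s = size L by rewrite /s size_sort.
have posi : forall i : 'I_(size L), 0 < Li L i.
  by move=> i; apply: (allP pos); rewrite /Li mem_nth.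
have cardI : #|Ico L k| = count (fun x : rat => Lco L k < x) L.
  by rewrite /Ico /Li card_count.
have Hsize : size (cands L (Ico L k) (fun _ => 1%N) (fun _ => k)) = (k * #|Ico L k|)%N.
  rewrite /cands size_allpairs_dep.
  have -> : [seq size (iota 1 (k.+1 - 1)) | _ <- enum (Ico L k)] = [seq k | _ <- enum (Ico L k)].
    by apply: eq_map => i; rewrite size_iota subn1.
  by rewrite sumn_const cardE.
case: (leqP k (size L)) => kn.
- have js : (k.-1 < size s)%N by rewrite sz prednK.
  have eL : Lco L k = nth 0 s k.-1 by rewrite /Lco kn.
  have LcoL : Lco L k \in L by rewrite eL -(mem_sort geR) mem_nth.
  have Lco0 : 0 < Lco L k by apply: (allP pos).
  have feasle : forall l : rat, 0 < l -> l <= Lco L k -> feasible L k l.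
    move=> l l0 lle; rewrite /feasible l0 /=.
    apply: le_trans (mcnt_ge_count l0 pos); rewrite lez_nat.
    apply: leq_trans (sub_count _ L); last first.
      by move=> x /=; apply: le_trans lle.
    rewrite -(permP pS) eL; have := count_ge_ge _ _ ss js; rewrite prednK //.
  have cle : (#|Ico L k| <= k.-1)%N.
    by rewrite cardI -(permP pS) eL; apply: count_gt_le.
  have cln : (#|Ico L k| <= size L)%N by rewrite cardI count_size.
  split; [|split => //; split].
  + split; first by move=> i _; split.
    split; first by move=> i _; left.
    split.
      move=> i _; have lk0 : 0 < Li L i / k%:R by rewrite divr_gt0 ?ltr0n ?posi.
      rewrite /feasible lk0 /=.
      apply: le_trans (mcnt_ge_elem L _ _ lk0 pos (mem_nth 0 (ltn_ord i))).
      by rewrite -/(Li L i) divKf ?gt_eqF ?posi // floor_ge_int.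
    move=> i; rewrite /Ico inE -leNgt => ile.
    have fi : feasible L k (Li L i) by apply: feasle.
    split => //; apply/eqP => eqi.
    have lt : lstar < Lco L k by rewrite lt_neqAle eq_sym neq -eqi ile.
    have := optstar _ (feasle _ Lco0 (lexx _)).
    have l0 : 0 < lstar by case/andP: fstar.
    by rewrite leNgt (ccost_lt L _ _ l0 lt LcoL pos).
  + by rewrite leq_mul2l leq_min cle cln orbT.
  + move=> uL; congr (_ * _)%N; apply/eqP; rewrite eqn_leq leq_min cle cln /=.
    rewrite geq_min; apply/orP; left.
    rewrite cardI -(permP pS) eL; apply: count_gt_ge => //.
    by rewrite /s sort_uniq.
- have eL : Lco L k = 0 by rewrite /Lco leqNgt kn.
  have cI : #|Ico L k| = size L.
    by rewrite cardI eL; apply/eqP; rewrite -all_count.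
  have mn : minn k.-1 (size L) = size L.
    by apply/minn_idPr; rewrite -ltnS prednK.
  rewrite mn cI; split; last (split; [by rewrite Hsize cI | split => //]).
  + split; first by move=> i _; split.
    split; first by move=> i _; left.
    split.
      move=> i _; have lk0 : 0 < Li L i / k%:R by rewrite divr_gt0 ?ltr0n ?posi.
      rewrite /feasible lk0 /=.
      apply: le_trans (mcnt_ge_elem L _ _ lk0 pos (mem_nth 0 (ltn_ord i))).
      by rewrite -/(Li L i) divKf ?gt_eqF ?posi // floor_ge_int.
    by move=> i; rewrite /Ico inE eL posi.

Qed.
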